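(* Let $K$ be a real closed field, $C$ a multiplicative cut in $K$, and let $L$ be the real closure of the ordered field $K(x)$, where $x$ realizes the cut $C$. Then for any $y\in L$ realizing the same cut $C$ of $K$, we have $x^{1/n}<y<x^n$ for some positive integer $n$.
   Context: A cut of a real closed field $K$ is a pair $C=(C^-,C^+)$ with $K=C^-\cup C^+$ disjoint and $C^-<C^+$. $K_+=\{c\in K:c>0\}$. The cut $C$ is multiplicative if $C^-\cap K_+$ is closed under multiplication and contains $2$. If $K\subseteq L$ are ordered fields, an element $a\in L$ realizes the cut $C$ of $K$ if $C^-=\{c\in K:c<a\}$ and $C^+=\{c\in K:c>a\}$. $K(x)$ denotes the ordered field generated by $K$ and an element $x$ realizing $C$. *)

(* Defs.v *)
From HB Require Import structures.
From mathcomp Require Import all_boot all_order all_algebra.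
Set Implicit Arguments. Unset Strict Implicit. Unset Printing Implicit Defensive.
Import Order.TTheory GRing.Theory Num.Theory.
Local Open Scope ring_scope.

(* A cut C = (C^-, C^+) of K is represented by its lower part Cm : pred K;
   C^+ is the complement of Cm.  The condition C^- < C^+ says every element
   of Cm is below every element outside Cm. *)
Definition is_cut (K : rcfType) (Cm : pred K) : Prop :=
  forall a b : K, a \in Cm -> b \notin Cm -> a < b.

Definition multiplicative_cut (K : rcfType) (Cm : pred K) : Prop :=
  is_cut Cm /\ (2%:R \in Cm) /\
  (forall a b : K, 0 < a -> 0 < b -> a \in Cm -> b \in Cm -> a * b \in Cm).

Definition realizes (K L : rcfType) (f : {rmorphism K -> L}) (Cm : pred K) (a : L)
  : Prop :=
  forall c : K, (c \in Cm <-> f c < a) /\ (c \notin Cm <-> a < f c).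

Definition in_Kx (K L : rcfType) (f : {rmorphism K -> L}) (x z : L) : Prop :=
  exists p q : {poly K},
    (map_poly f q).[x] != 0 /\ z = (map_poly f p).[x] / (map_poly f q).[x].

Definition is_real_closure_of_Kx (K L : rcfType) (f : {rmorphism K -> L}) (x : L)
  : Prop :=
  {mono f : a b / a <= b} /\
  forall z : L, exists p : {poly L},
    [/\ p != 0, root p z & forall i : nat, in_Kx f x p`_i].

(* x^{1/n} < y, with x^{1/n} the positive n-th root of x. *)
Definition root_lt (L : rcfType) (n : nat) (x y : L) : Prop :=
  exists r : L, [/\ 0 < r, r ^+ n = x & r < y].

(* Main.v *)
Require Import Defs.
From HB Require Import structures.
From mathcomp Require Import all_boot all_order all_algebra.
From mathcomp Require Import ring lra zify.
From Stdlib Require Import Classical.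
Import Order.TTheory GRing.Theory Num.Theory.
Local Open Scope ring_scope.

Lemma nth_root (R : rcfType) (c : R) (n : nat) :
  0 <= c -> (0 < n)%N -> exists2 r : R, 0 <= r & r ^+ n = c.
Proof.
move=> c0 n0.
have := @poly_ivt R ('X^n - c%:P) 0 (1 + c).
rewrite !hornerE expr0n (gtn_eqF n0) sub0r oppr_le0 c0 /=.
have h1 : 1 <= 1 + c by lra.
have h2 : 1 + c <= (1 + c) ^+ n by apply: ler_eXnr.
case; first by lra.
  by rewrite subr_ge0; lra.
move=> r /andP [r0 _]; rewrite /root !hornerE subr_eq0 => /eqP rc.
by exists r.
Qed.

Lemma one_in (K : rcfType) (Cm : pred K) : multiplicative_cut Cm -> 1 \in Cm.
Proof.
move=> [hc [h2 _]]; apply/negPn/negP => h1.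
have := hc _ _ h2 h1; lra.
Qed.

Arguments one_in {K Cm}.

Lemma pow_in (K : rcfType) (Cm : pred K) (c : K) (M : nat) :
  multiplicative_cut Cm -> 0 < c -> c \in Cm -> c ^+ M.+1 \in Cm.
Proof.
move=> hm c0 cin; elim: M => [|M IH]; first by rewrite expr1.
case: hm => [_ [_ hmul]].
by rewrite exprS; apply: hmul => //; apply: exprn_gt0.
Qed.

Lemma mono_lt (K L : rcfType) (f : {rmorphism K -> L}) :
  {mono f : a b / a <= b} -> {mono f : a b / a < b}.
Proof. move=> h; exact: leW_mono. Qed.
Arguments mono_lt {K L f}.

Lemma f_norm (K L : rcfType) (f : {rmorphism K -> L}) (a : K) :
  {mono f : a b / a <= b} -> f `|a| = `|f a|.
Proof.
move=> hm; have [a0|a0] := leP 0 a.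
  by rewrite !ger0_norm // -(rmorph0 f) hm.
rewrite !ltr0_norm ?rmorphN //.
by rewrite -(rmorph0 f) (mono_lt hm).
Qed.

Lemma realize_pow_lt (K L : rcfType) (f : {rmorphism K -> L}) (Cm : pred K) (v : L) (c : K) :
  multiplicative_cut Cm -> {mono f : a b / a <= b} -> realizes f Cm v ->
  0 < c -> c \notin Cm -> forall M : nat, v ^+ M < f c.
Proof.
move=> hm hmono hr c0 cn [|M].
  rewrite expr0 -(rmorph1 f) (mono_lt hmono).
  exact: ((proj1 hm) 1 c (one_in hm) cn).
have [r r0 rc] := @nth_root K c M.+1 (ltW c0) isT.
have r0' : 0 < r.
  rewrite lt_def r0 andbT; apply/eqP => r00.
  by move: rc; rewrite r00 expr0n /= => c00; move: c0; rewrite -c00 ltxx.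
have rn : r \notin Cm.
  apply/negP => rin; move/negP: cn; apply; rewrite -rc; exact: pow_in.
have := (proj2 (hr r)).1 rn => vr.
rewrite -rc rmorphXn; apply: ltrXn2r => //.
have := (hr 1).1; rewrite rmorph1 => -[/(_ (one_in hm)) h _]; lra.
Qed.

Lemma realize_nat (K L : rcfType) (f : {rmorphism K -> L}) (Cm : pred K) (u : L) :
  multiplicative_cut Cm -> realizes f Cm u -> forall k : nat, k%:R < u.
Proof.
move=> hm hr k.
have h20 : (0:K) < 2 by lra.
have h2in : (2:K) \in Cm by case: hm => [_ []].
have h2 := @pow_in K Cm 2 k hm h20 h2in.
have := (proj1 (hr _)).1 h2; rewrite rmorphXn rmorph_nat => h.
apply: lt_trans h; rewrite -natrX ltr_nat.
exact: ltnW (ltn_expl k.+1 (isT : (1 < 2)%N)).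

Qed.
Arguments realize_nat {K L f Cm u}.
Arguments realize_pow_lt {K L f Cm v c}.
Arguments f_norm {K L f}.

Lemma domA (R : realFieldType) (u v al al' b : R) (p q p' q' N : nat) :
  1 <= u -> u <= v -> (forall k : nat, k%:R < v) -> (forall M, v ^+ M < b) ->
  0 < al' -> al = b * al' ->
  N%:R * (al' * (u ^+ p' * v ^+ q')) < al * (u ^+ p * v ^+ q).
Proof.
move=> u1 uv vN vb al'0 ->.
have v1 : 1 <= v by apply: le_trans uv.
have e1 : u ^+ p' <= v ^+ p' by apply: lerXn2r; rewrite ?nnegrE; lra.
have e2 : 1 <= u ^+ p * v ^+ q by apply: mulr_ege1; apply: exprn_ege1.
have e3 : 1 <= v ^+ q' by apply: exprn_ege1.
have e4 : 1 <= v ^+ p' by apply: exprn_ege1.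
have e5 : 0 <= u ^+ p' by apply: exprn_ge0; lra.
have := vb (1 + p' + q')%N; rewrite !exprD expr1 => e6.
have := vN N => e7.
have e8 : N%:R * (u ^+ p' * v ^+ q') < b * (u ^+ p * v ^+ q).
  set (A := (u ^+ p')) in *; set (B := (v ^+ q')) in *; set (C := (v ^+ p')) in *; set (X := (u ^+ p * v ^+ q)) in *.
  have h1 : A * B <= C * B by nra.
  have CB : 1 <= C * B by apply: mulr_ege1.
  have h2 : N%:R * (C * B) < v * (C * B) by nra.
  have h3 : 0 <= (N%:R : R) by apply: ler0n.
  have b0 : 1 < b by have := vb 0%N; rewrite expr0.
  have h4 : N%:R * (A * B) <= N%:R * (C * B) by nra.
  have h5 : b <= b * X by nra.
  lra.
set (Y := (u ^+ p' * v ^+ q')) in *.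
nra.
Qed.

Lemma natltX (R : realFieldType) (u : R) (N : nat) :
  1 <= u -> (forall k : nat, k%:R < u) -> N%:R < u ^+ N.
Proof.
move=> u1 uN; case: N => [|N]; first by rewrite expr0 ltr01.
apply: lt_le_trans (uN _.+1) _; exact: ler_eXnr.
Qed.

Lemma domB (R : realFieldType) (u v al al' b : R) (p q p' q' N : nat) :
  1 <= u -> (forall k : nat, k%:R < u) -> (forall k, u ^+ k < v) ->
  0 < al' -> al = b * al' -> 0 < b -> b^-1 < u -> b^-1 * b^-1 < u ->
  ((q' < q)%N || ((q == q') && (p' < p)%N)) ->
  N%:R * (al' * (u ^+ p' * v ^+ q')) < al * (u ^+ p * v ^+ q).
Proof.
move=> u1 uN uv al'0 -> b0 hb1 hb2 lex.
have bu1 : 1 < b * u.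
  by rewrite -(ltr_pM2l b0) mulfV ?gt_eqF // in hb1.
have bu2 : u < (b * u) ^+ 2.
  rewrite -(ltr_pM2l (mulr_gt0 b0 b0)) in hb2.
  move: hb2; rewrite mulrACA mulfV ?gt_eqF // mulr1 => h.
  have u0 : 0 < u by lra.
  rewrite -(ltr_pM2r u0) mul1r in h.
  rewrite expr2.
  by apply: (lt_le_trans h); rewrite le_eqVlt; apply/orP; left; apply/eqP; ring.
have h3 : 0 <= (N%:R : R) by apply: ler0n.
have e5 : 0 <= u ^+ p' by apply: exprn_ge0; lra.
have e3 : 1 <= v ^+ q'.
  apply: exprn_ege1; have := uv 0%N; rewrite expr0; lra.
suff e8 : N%:R * (u ^+ p' * v ^+ q') < b * (u ^+ p * v ^+ q).
  set (Y := (u ^+ p' * v ^+ q')) in *.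
  have Y0 : 0 <= Y by rewrite /Y; apply: mulr_ge0 => //; lra.
  nra.
case/orP: lex => [lt_q | /andP [/eqP eq_q lt_p]].
- have ev : v ^+ q' * v <= v ^+ q.
    rewrite -exprSr; apply: ler_weXn2l => //.
    have := uv 0%N; rewrite expr0; lra.
  have eu : 1 <= u ^+ p by apply: exprn_ege1.
  have := uv (p' + N + 1)%N; rewrite !exprD expr1 => evu.
  have := @natltX _ u N u1 uN => uNN.
  set (A := (u ^+ p')) in *; set (B := (v ^+ q')) in *; set (X := (u ^+ p)) in *; set (Vq := (v ^+ q)) in *.
  set (UN := (u ^+ N)) in *.
  have v1 : 1 <= v by have := uv 0%N; rewrite expr0; lra.
  have B1 : 1 <= B by [].
  have A0 : 0 < A by apply: exprn_gt0; lra.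
  have UN0 : 0 < UN by apply: exprn_gt0; lra.
  have Vq0 : 0 <= Vq by apply: exprn_ge0; lra.
  have g1 : B * v <= X * Vq by nra.
  have h1 : b * (B * v) <= b * (X * Vq) by rewrite ler_pM2l.
  have h2 : b * (B * (A * UN * u)) < b * (B * v).
    by rewrite ltr_pM2l // ltr_pM2l //; lra.
  have AU0 : 0 < A * UN by apply: mulr_gt0.
  have h5 : A * UN < A * UN * (b * u) by rewrite ltr_pMr.
  have h5' : B * (A * UN) < B * (A * UN * (b * u)) by rewrite ltr_pM2l //; lra.
  have h6 : B * (A * N%:R) <= B * (A * UN).
    rewrite ler_pM2l; last lra.
    rewrite ler_pM2l //; lra.
  have E1 : B * (A * UN * (b * u)) = b * (B * (A * UN * u)) by ring.
  have E2 : N%:R * (A * B) = B * (A * N%:R) by ring.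
  lra.
- subst q'.
  have eu : u ^+ p' * u <= u ^+ p by rewrite -exprSr; apply: ler_weXn2l.
  have uNN := uN (N * N)%N; rewrite natrM in uNN.
  have bN : N%:R < b * u.
    rewrite expr2 in bu2; set (w := b * u) in *.
    rewrite ltNge; apply/negP => hw.
    have w0 : 0 <= w by lra.
    have : w * w <= N%:R * N%:R by nra.
    lra.
  set (A := (u ^+ p')) in *; set (B := (v ^+ q)) in *; set (X := (u ^+ p)) in *.
  have g1 : (A * u) * B <= X * B by rewrite ler_pM2r //; lra.
  have g2 : b * ((A * u) * B) <= b * (X * B) by rewrite ler_pM2l.
  have AB : 0 < A * B by apply: mulr_gt0; [apply: exprn_gt0|]; lra.
  have g3 : N%:R * (A * B) < (b * u) * (A * B) by rewrite ltr_pM2r.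
  have E : b * ((A * u) * B) = (b * u) * (A * B) by ring.
  lra.
Qed.

Lemma pairwise (K L : rcfType) (f : {rmorphism K -> L}) (Cm : pred K) (u v : L)
  (a a' : K) (p q p' q' N : nat) :
  multiplicative_cut Cm -> {mono f : a b / a <= b} ->
  realizes f Cm u -> realizes f Cm v -> (forall k, u ^+ k < v) ->
  a != 0 -> a' != 0 -> (p != p') || (q != q') ->
  N%:R * (`|f a'| * (u ^+ p' * v ^+ q')) < `|f a| * (u ^+ p * v ^+ q) \/
  N%:R * (`|f a| * (u ^+ p * v ^+ q)) < `|f a'| * (u ^+ p' * v ^+ q').
Proof.
move=> hm hmono hu hv uv a0 a'0 neq.
have uN := realize_nat hm hu; have vN := realize_nat hm hv.
have u1 : 1 <= u by have := uN 1%N; lra.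
have uv1 : u <= v by have := uv 1%N; rewrite expr1; lra.
have fa0 : 0 < `|f a| by rewrite normr_gt0 fmorph_eq0.
have fa'0 : 0 < `|f a'| by rewrite normr_gt0 fmorph_eq0.
set b := `|a| / `|a'|.
have b0 : 0 < b by rewrite divr_gt0 // normr_gt0.
have bi0 : 0 < b^-1 by rewrite invr_gt0.
have fb : f b = `|f a| / `|f a'| by rewrite fmorph_div !(f_norm _ hmono).
have fbi : f b^-1 = `|f a'| / `|f a| by rewrite fmorphV fb invf_div.
have E1 : `|f a| = f b * `|f a'| by rewrite fb divfK // gt_eqF.
have E2 : `|f a'| = f b^-1 * `|f a| by rewrite fbi divfK // gt_eqF.
case bin : (b \in Cm); last first.
  left; apply: (@domA _ u v _ _ (f b)) => //; exact: (realize_pow_lt hm hmono hv b0 (negbT bin)).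
case biin : (b^-1 \in Cm); last first.
  right; apply: (@domA _ u v _ _ (f b^-1)) => //; exact: (realize_pow_lt hm hmono hv bi0 (negbT biin)).
have hmul := proj2 (proj2 hm).
have fb0 : 0 < f b by rewrite fb divr_gt0.
have fbi0 : 0 < f b^-1 by rewrite fbi divr_gt0.
have [lex | nlex] := boolP ((q' < q)%N || ((q == q') && (p' < p)%N)).
  left; apply: (@domB _ u v _ _ (f b)) => //.
  - by rewrite -fmorphV; exact: ((proj1 (hu _)).1 biin).
  - rewrite -fmorphV -rmorphM; apply: ((proj1 (hu _)).1); exact: hmul.
right; apply: (@domB _ u v _ _ (f b^-1)) => //.
- by rewrite -fmorphV invrK; exact: ((proj1 (hu _)).1 bin).
- rewrite -fmorphV -rmorphM invrK; apply: ((proj1 (hu _)).1); exact: hmul.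
- move: nlex neq; rewrite negb_or negb_and -!leqNgt; lia.
Qed.

Arguments pairwise {K L f Cm u v a a' p q p' q'} N.

Lemma main_sum (K L : rcfType) (f : {rmorphism K -> L}) (Cm : pred K) (u v : L)
  (n m : nat) (c : 'I_n -> 'I_m -> K) :
  multiplicative_cut Cm -> {mono f : a b / a <= b} ->
  realizes f Cm u -> realizes f Cm v -> (forall k, u ^+ k < v) ->
  \sum_(i < n) \sum_(j < m) f (c i j) * (u ^+ i * v ^+ j) = 0 ->
  forall i j, c i j = 0.
Proof.
move=> hm hmono hu hv uv hsum i0 j0; apply/eqP; apply: contraT => hc0.
have uN := realize_nat hm hu.
have u0 : 0 < u by have := uN 0%N; lra.
have v0 : 0 < v by have := uv 0%N; rewrite expr0; lra.
rewrite pair_big /= in hsum.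
pose t (k : 'I_n * 'I_m) := f (c k.1 k.2) * (u ^+ k.1 * v ^+ k.2).
have tn k : `|t k| = `|f (c k.1 k.2)| * (u ^+ k.1 * v ^+ k.2).
  rewrite /t normrM; congr (_ * _); apply: ger0_norm.
  by apply: mulr_ge0; apply: exprn_ge0; lra.
pose k0 : 'I_n * 'I_m := (i0, j0).
have t0 : 0 < `|t k0|.
  rewrite tn; apply: mulr_gt0; first by rewrite normr_gt0 fmorph_eq0.
  by apply: mulr_gt0; apply: exprn_gt0.
case: (@arg_maxP _ _ _ k0 predT (fun k => `|t k|) isT) => ks _ hmax.
have tks : 0 < `|t ks| by apply: lt_le_trans t0 (hmax k0 isT).
set NN := (2 * #|{: 'I_n * 'I_m}|)%N.
have card0 : (0 < #|{: 'I_n * 'I_m}|)%N by apply/card_gt0P; exists k0.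
have claim k : k != ks -> NN%:R * `|t k| <= `|t ks|.
  case: k => k1 k2 kneq.
  have [ck0|ck0] := eqVneq (c k1 k2) 0.
    by rewrite tn ck0 rmorph0 normr0 mul0r mulr0; apply: ltW.
  have hc : c ks.1 ks.2 != 0.
    apply/eqP => hz; move: tks; rewrite tn hz rmorph0 normr0 mul0r ltxx //.
  have dif : (ks.1 != k1 :> nat) || (ks.2 != k2 :> nat).
    move: kneq; apply: contraR; rewrite negb_or !negbK !val_eqE.
    by move=> /andP [/eqP <- /eqP <-]; rewrite -surjective_pairing.
  case: (pairwise NN hm hmono hu hv uv hc ck0 dif) => h.
    by rewrite !tn; apply: ltW.
  exfalso.
  have h1 := hmax (k1, k2) isT.
  have h' : NN%:R * `|t ks| < `|t (k1, k2)| by rewrite !tn. clear h.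
  have NN1 : (1 : L) <= NN%:R by rewrite ler1n /NN; lia.
  have : `|t ks| <= NN%:R * `|t ks| by rewrite ler_pMl.
  have : `|t (k1, k2)| <= `|t ks| by exact: h1.
  lra.
rewrite (bigD1 ks) //= in hsum.
have hrest : `|t ks| <= \sum_(k | k != ks) `|t k|.
  have -> : `|t ks| = `|\sum_(k | k != ks) t k|.
    by rewrite -normrN; congr `|_|; apply/eqP; rewrite eq_sym -subr_eq0 opprK addrC hsum.
  exact: ler_norm_sum.
have h2 : NN%:R * \sum_(k | k != ks) `|t k| <= \sum_(k | k != ks) `|t ks|.
  rewrite mulr_sumr; apply: ler_sum => k kn; exact: claim.
have h3 : \sum_(k | k != ks) `|t ks| <= \sum_(k : 'I_n * 'I_m) `|t ks|.
  rewrite [X in _ <= X](bigD1 ks) //= lerDr; exact: ltW.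
have h4 : NN%:R * `|t ks| <= NN%:R * \sum_(k | k != ks) `|t k|.
  by rewrite ler_pM2l // ltr0n /NN; lia.
have h5 := le_trans (le_trans h4 h2) h3.
rewrite sumr_const in h5.
rewrite cardT -cardT in h5.
rewrite -(mulr_natr (`|t ks|)) in h5; move: h5; rewrite /NN natrM.
have : (0 : L) < #|{: 'I_n * 'I_m}|%:R by rewrite ltr0n.
set C := #|{: 'I_n * 'I_m}|%:R; set T := `|t ks| => C0 h5.
have T0 : 0 < T := tks.
nra.
Qed.

Lemma poly_rel (K L : rcfType) (f : {rmorphism K -> L}) (x y : L) :
  (exists p : {poly L}, [/\ p != 0, root p y & forall i : nat, in_Kx f x p`_i]) ->
  exists n m (c : 'I_n -> 'I_m -> K), (exists i j, c i j != 0) /\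
    \sum_(i < n) \sum_(j < m) f (c i j) * (x ^+ j * y ^+ i) = 0.
Proof.
move=> [p [p0 ry hc]].
set n := size p.
have hc' : forall i : 'I_n, exists AB : {poly K} * {poly K},
    (map_poly f AB.2).[x] != 0 /\ p`_i = (map_poly f AB.1).[x] / (map_poly f AB.2).[x].
  move=> i; have [A [B [h1 h2]]] := hc i; by exists (A, B).
have [AB hAB] := fin_all_exists hc'.
pose a i := (map_poly f (AB i).1).[x].
pose b i := (map_poly f (AB i).2).[x].
have b0 (i : 'I_n) : b i != 0 by have [] := hAB i.
have pa (i : 'I_n) : p`_i = a i / b i by have [] := hAB i.
pose Q (i : 'I_n) := (AB i).1 * \prod_(j < n | j != i) (AB j).2.
have fQ (i : 'I_n) : (map_poly f (Q i)).[x] = a i * \prod_(j < n | j != i) b j.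
  by rewrite /Q rmorphM rmorph_prod hornerM horner_prod.
pose m := \max_(i < n) size (Q i).
pose c (i : 'I_n) (j : 'I_m) := (Q i)`_j.
have fQc (i : 'I_n) : (map_poly f (Q i)).[x] = \sum_(j < m) f (c i j) * x ^+ j.
  rewrite (@horner_coef_wide _ m); last by rewrite size_map_poly; exact: (leq_bigmax (F := fun i => size (Q i)) i).
  by apply: eq_bigr => j _; rewrite coef_map.
exists n, m, c; split.
  have n0 : (0 < n)%N by rewrite lt0n size_poly_eq0.
  have hn : (n.-1 < n)%N by rewrite ltn_predL.
  pose i0 : 'I_n := Ordinal hn.
  have pi0 : p`_i0 != 0 by rewrite /= -lead_coefE lead_coef_eq0.
  have ai0 : a i0 != 0 by move: pi0; rewrite pa; apply: contraNneq => ->; rewrite mul0r.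
  have : (map_poly f (Q i0)).[x] != 0.
    by rewrite fQ mulf_neq0 //; apply/prodf_neq0 => j _; exact: b0.
  rewrite fQc => hne.
  case: (pickP (fun j : 'I_m => c i0 j != 0)) => [j hj | hall]; first by exists i0, j.
  exfalso; move/eqP: hne; apply; apply: big1 => j _.
  by move/negbFE/eqP: (hall j) => ->; rewrite rmorph0 mul0r.
have : \sum_(i < n) (map_poly f (Q i)).[x] * y ^+ i = (\prod_(j < n) b j) * p.[y].
  rewrite horner_coef mulr_sumr; apply: eq_bigr => i _.
  rewrite fQ pa [\prod_(j < n) b j](bigD1 i) //=.
  by field; exact: b0.
move/eqP: ry => ->; rewrite mulr0 => hs.
apply: etrans hs; apply: eq_bigr => i _.
by rewrite fQc mulr_suml; apply: eq_bigr => j _; rewrite mulrA.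
Qed.

Theorem lemma2p9 (K L : rcfType) (f : {rmorphism K -> L}) (Cm : pred K) (x : L) :
  multiplicative_cut Cm ->
  realizes f Cm x ->
  is_real_closure_of_Kx f x ->
  forall y : L, realizes f Cm y ->
  exists n : nat, (0 < n)%N /\ root_lt n x y /\ y < x ^+ n.
Proof.
move=> hm hx [hmono hrc] y hy.
have [n [m [c [[i0 [j0 hc0]] hsum]]]] := @poly_rel K L f x y (hrc y).
have xN := realize_nat hm hx; have yN := realize_nat hm hy.
have x1 : 1 < x by have := xN 1%N.
have y1 : 1 < y by have := yN 1%N.
have H1 : ~ (forall k, x ^+ k < y).
  move=> hxy.
  have := @main_sum K L f Cm x y m n (fun j i => c i j) hm hmono hx hy hxy.
  rewrite exchange_big /= => /(_ hsum j0 i0) /eqP; exact/negP.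
have H2 : ~ (forall k, y ^+ k < x).
  move=> hyx.
  have := @main_sum K L f Cm y x n m c hm hmono hy hx hyx.
  have hs' : \sum_(i < n) \sum_(j < m) f (c i j) * (y ^+ i * x ^+ j) = 0.
    by apply: (etrans _ hsum); apply: eq_bigr => i _; apply: eq_bigr => j _; rewrite [y ^+ i * _]mulrC.
  move=> /(_ hs' i0 j0) /eqP; exact/negP.
have [n1 hn1] : exists n1, y < x ^+ n1.
  case: (classic (exists n1, y < x ^+ n1)) => // hn; exfalso; apply: H1 => k.
  rewrite ltNge; apply/negP => hle; apply: hn; exists k.+1.
  by apply: le_lt_trans hle _; rewrite ltr_eXn2l.
have [m1 hm1] : exists m1, x < y ^+ m1.
  case: (classic (exists m1, x < y ^+ m1)) => // hn; exfalso; apply: H2 => k.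
  rewrite ltNge; apply/negP => hle; apply: hn; exists k.+1.
  by apply: le_lt_trans hle _; rewrite ltr_eXn2l.
set N := (maxn n1 m1).+1.
exists N; split => //; split.
  have [r r0 rN] := @nth_root L x N (ltW (lt_trans ltr01 x1)) isT.
  exists r; split => //.
    rewrite lt_def r0 andbT; apply/eqP => r00.
    by move: rN; rewrite r00 expr0n /= => x0; move: x1; rewrite -x0 ltr10.
  rewrite ltNge; apply/negP => hyr.
  have : y ^+ N <= r ^+ N by apply: lerXn2r => //; rewrite nnegrE; lra.
  rewrite rN => hyx.
  have : y ^+ m1 <= y ^+ N by rewrite ler_eXn2l // /N; lia.
  lra.
apply: lt_le_trans hn1 _; rewrite ler_eXn2l // /N; lia.
Qed.
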